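(* Let $d\in\mathbb{N}$ and let $\mathcal{P}$ be a partition of $\mathbb{R}^{d}$. Suppose there exists $D\in(0,\infty)$ that is a strict pairwise bound for every $X\in\mathcal{P}$, and there exists $\epsilon\in(0,\infty)$ such that $|\mathcal{N}_{\epsilon}(\vec{q})|\leq d+1$ for all $\vec{q}\in\mathbb{R}^{d}$. Then there exists $\vec{p}\in\mathbb{R}^{d}$ such that $|\mathcal{N}_{\epsilon}(\vec{p})|=d+1$. Furthermore, $\mathcal{P}$ contains a $(d+1)$-clique.
   Context: On $\mathbb{R}^d$ use $d_{max}(\vec{x},\vec{y})=\max_i|x_i-y_i|$; $D$ is a strict pairwise bound for $X$ if $d_{max}(\vec{x},\vec{y})<D$ for all $\vec{x},\vec{y}\in X$; $\overline{B}_{\epsilon}(\vec{p})=\{\vec{x}:d_{max}(\vec{x},\vec{p})\le\epsilon\}$; $\mathcal{N}_{\epsilon}(\vec{p})=\{X\in\mathcal{P}: X\cap\overline{B}_{\epsilon}(\vec{p})\neq\emptyset\}$. Members $X,Y$ are adjacent if $\overline{X}\cap\overline{Y}\ne\emptyset$; an $n$-clique is a set of $n$ distinct pairwise adjacent members. *)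

(* Defs.v *)
From Stdlib Require Import Reals.
From mathcomp Require Import all_boot.
Open Scope R_scope.

Definition pointR (d : nat) := 'I_d -> R.
Definition regionR (d : nat) := pointR d -> Prop.
Definition setfam (d : nat) := regionR d -> Prop.

Set Implicit Arguments. Unset Strict Implicit. Unset Printing Implicit Defensive.

Definition dmax (d : nat) (x y : pointR d) : R :=
  \big[Rmax/0]_(i < d) Rabs (x i - y i).

Definition is_partition (d : nat) (P : setfam d) : Prop :=
  (forall X, P X -> exists x, X x) /\
  (forall X Y, P X -> P Y -> X <> Y -> forall x, X x -> Y x -> False) /\
  (forall x, exists X, P X /\ X x).

Definition strict_pairwise_bound (d : nat) (D : R) (X : regionR d) : Prop :=
  forall x y, X x -> X y -> dmax x y < D.

Definition closed_ball (d : nat) (eps : R) (p : pointR d) : regionR d :=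
  fun x => dmax x p <= eps.

Definition nbhd (d : nat) (P : setfam d) (eps : R) (p : pointR d) : setfam d :=
  fun X => P X /\ exists x, X x /\ closed_ball eps p x.

(* closureR in R^d (w.r.t. the d_max metric, which induces the usual topology) *)
Definition closureR (d : nat) (X : regionR d) : regionR d :=
  fun x => forall e, 0 < e -> exists y, X y /\ dmax x y < e.

Definition adjacent (d : nat) (X Y : regionR d) : Prop :=
  exists x, closureR X x /\ closureR Y x.

Definition card_le (d : nat) (F : setfam d) (n : nat) : Prop :=
  forall f : 'I_n.+1 -> regionR d, (forall i, F (f i)) -> ~ injective f.

Definition card_eq (d : nat) (F : setfam d) (n : nat) : Prop :=
  exists f : 'I_n -> regionR d,
    injective f /\ (forall i, F (f i)) /\ (forall X, F X -> exists i, X = f i).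

Definition has_clique (d : nat) (P : setfam d) (n : nat) : Prop :=
  exists f : 'I_n -> regionR d,
    injective f /\ (forall i, P (f i)) /\
    (forall i j, i <> j -> adjacent (f i) (f j)).

(* Main.v *)
Require Import Defs.
From Stdlib Require Import Reals.
From mathcomp Require Import all_boot.
From Stdlib Require Import Lra FunctionalExtensionality ClassicalEpsilon Classical.
From Stdlib Require Rtopology List.
Set Implicit Arguments. Unset Strict Implicit. Unset Printing Implicit Defensive.
Open Scope nat_scope.

Definition upd (v : nat -> nat) (i x : nat) : nat -> nat :=
  fun m => if m == i then x else v m.
Definition shift (v : nat -> nat) (i : nat) : nat -> nat := upd v i (v i).+1.

Lemma shiftC v i j : shift (shift v i) j = shift (shift v j) i.
Proof.
apply: functional_extensionality => m; rewrite /shift /upd.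
by do ! (case: eqP => //= ?; subst).
Qed.

Fixpoint labok (lab : (nat -> nat) -> nat) (c : nat) (v : nat -> nat) (S : seq nat) : bool :=
  match S with
  | [::] => lab v < c
  | i :: S' => labok lab c v S' && labok lab c (shift v i) S'
  end.

Fixpoint haslab (lab : (nat -> nat) -> nat) (c : nat) (v : nat -> nat) (S : seq nat) : bool :=
  match S with
  | [::] => lab v == c
  | i :: S' => haslab lab c v S' || haslab lab c (shift v i) S'
  end.

Fixpoint Dg (lab : (nat -> nat) -> nat) (k : nat) (v : nat -> nat) (S : seq nat) : bool :=
  match k with
  | 0 => true
  | k'.+1 => \big[addb/false]_(i <- S)
      ((labok lab k'.+1 v (rem i S) && Dg lab k' v (rem i S)) (+)
       (labok lab k'.+1 (shift v i) (rem i S) && Dg lab k' (shift v i) (rem i S)))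
  end.

Lemma labok_facet lab c S : forall v i, i \in S -> labok lab c v S ->
  labok lab c v (rem i S) && labok lab c (shift v i) (rem i S).
Proof.
elim: S => [|a S IH] v i //= iS /andP[h1 h2].
case: (eqVneq a i) => [eai|hai]; first by subst a; rewrite h1 h2.
move: iS; rewrite inE eq_sym (negbTE hai) /= => iS.
have /andP[h3 h4] := IH v i iS h1.
have /andP[h5 h6] := IH (shift v a) i iS h2.
by rewrite h3 h4 h5 /= -shiftC h6.
Qed.

Lemma haslab_facet lab c S : forall v i, i \in S ->
  haslab lab c v (rem i S) || haslab lab c (shift v i) (rem i S) -> haslab lab c v S.
Proof.
elim: S => [|a S IH] v i //= iS.
case: (eqVneq a i) => [eai|hai]; first by subst a.
move: iS; rewrite inE eq_sym (negbTE hai) /= => iS.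
case/orP => /orP [h|h].
- by rewrite (IH v i iS) ?h.
- by rewrite (IH (shift v a) i iS) ?h ?orbT.
- by rewrite (IH v i iS) ?h ?orbT.
- by rewrite (IH (shift v a) i iS) ?orbT // shiftC h orbT.
Qed.

Definition isv (v : nat -> nat) (S : seq nat) (x : nat -> nat) : Prop :=
  (forall m, m \notin S -> x m = v m) /\ (forall m, v m <= x m <= (v m).+1).

Lemma isv_l v a S x : isv v S x -> isv v (a :: S) x.
Proof.
case=> h1 h2; split=> // m; rewrite inE negb_or => /andP[_]; exact: h1.
Qed.

Lemma isv_r v a S x : a \notin S -> isv (shift v a) S x -> isv v (a :: S) x.
Proof.
move=> aS [h1 h2]; split.
- move=> m; rewrite inE negb_or => /andP[ma mS]; rewrite h1 // /shift /upd (negbTE ma) //.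
- move=> m; case: (eqVneq m a) => [->|ma].
  + by rewrite h1 // /shift /upd eqxx leqnSn leqnn.
  + by have := h2 m; rewrite /shift /upd (negbTE ma).
Qed.

Lemma haslab_ex lab c S : uniq S -> forall v, haslab lab c v S ->
  exists x, isv v S x /\ lab x = c.
Proof.
elim: S => [|a S IH] /= => [_ v /eqP h|/andP[aS uS] v].
- exists v; split=> //; split=> // m; by rewrite leqnn leqnSn.
- case/orP=> h.
  + have [x [hx hc]] := IH uS v h; exists x; split=> //; exact: isv_l.
  + have [x [hx hc]] := IH uS _ h; exists x; split=> //; exact: isv_r.
Qed.

Lemma nlabok_ex lab c S : uniq S -> forall v, ~~ labok lab c v S ->
  exists x, isv v S x /\ c <= lab x.
Proof.
elim: S => [|a S IH] /= => [_ v h|/andP[aS uS] v].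
- exists v; split; [split=> // m; by rewrite leqnn leqnSn| by rewrite leqNgt].
- rewrite negb_and; case/orP=> h.
  + have [x [hx hc]] := IH uS v h; exists x; split=> //; exact: isv_l.
  + have [x [hx hc]] := IH uS _ h; exists x; split=> //; exact: isv_r.
Qed.

Lemma labok_all lab c S : uniq S -> forall v,
  (forall x, isv v S x -> lab x < c) -> labok lab c v S.
Proof.
elim: S => [|a S IH] /= => [_ v h|/andP[aS uS] v h].
- apply: h; split=> // m; by rewrite leqnn leqnSn.
- rewrite IH ?IH // => x hx; apply: h; [exact: isv_r | exact: isv_l].
Qed.

Lemma haslab_labok lab k S : forall v, ~~ labok lab k v S -> labok lab k.+1 v S ->
  haslab lab k v S.
Proof.
elim: S => [|a S IH] v /=.
- by rewrite -leqNgt ltnS => h1 h2; rewrite eqn_leq h1 h2.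
- rewrite negb_and => /orP[h|h] /andP[h1 h2].
  + by rewrite IH.
  + by rewrite (IH (shift v a)) ?orbT.
Qed.

Lemma xor_sym (T : nat -> nat -> bool) (S : seq nat) : uniq S ->
  (forall i j, T i j = T j i) ->
  \big[addb/false]_(i <- S) \big[addb/false]_(j <- rem i S) T i j = false.
Proof.
move=> uS hT; elim: S uS => [|a S IH] /=; first by rewrite big_nil.
case/andP=> aS uS; rewrite big_cons eqxx.
rewrite [X in _ (+) X](eq_big_seq (fun i => T i a (+) \big[addb/false]_(j <- rem i S) T i j)); last first.
  move=> i iS /=; have ai : a != i by apply: contraNneq aS => ->.
  by rewrite (negbTE ai) big_cons.
rewrite big_split /= (IH uS) addbF.
rewrite [X in _ (+) X](eq_bigr (fun j => T a j)) ?addbb // => j _; exact: hT.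
Qed.

Lemma big_xor_ex (T : Type) (F : T -> bool) (s : seq T) :
  \big[addb/false]_(i <- s) F i -> exists i, List.In i s /\ F i.
Proof.
elim: s => [|a s IH]; first by rewrite big_nil.
rewrite big_cons; case: (F a) /idP => [h|h] /=.
- by move=> _; exists a; split=> //; left.
- by move/IH=> [i [hi hf]]; exists i; split=> //; right.
Qed.

Lemma big_xor_ex_seq (F : nat -> bool) (s : seq nat) :
  \big[addb/false]_(i <- s) F i -> exists i, i \in s /\ F i.
Proof.
elim: s => [|a s IH]; first by rewrite big_nil.
rewrite big_cons; case: (F a) /idP => [h|h] /=.
- by move=> _; exists a; rewrite inE eqxx.
- by move/IH=> [i [hi hf]]; exists i; rewrite inE hi orbT.
Qed.

Definition Dstep lab k w R := labok lab k.+1 w R && Dg lab k w R.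

Lemma Dg_S lab k v S : Dg lab k.+1 v S =
  \big[addb/false]_(i <- S) (Dstep lab k v (rem i S) (+) Dstep lab k (shift v i) (rem i S)).
Proof. by []. Qed.

Lemma remC (S : seq nat) i j : uniq S -> rem j (rem i S) = rem i (rem j S).
Proof.
move=> uS; rewrite (rem_filter j (rem_uniq i uS)) (rem_filter i (rem_uniq j uS)) !rem_filter //.
elim: S {uS} => //= x s IH.
by case: ifP => hi; case: ifP => hj /=; rewrite ?hi ?hj IH.
Qed.

Lemma Dg_even lab k S v : uniq S -> size S = k.+1 -> labok lab k.+1 v S ->
  Dg lab k.+1 v S = false.
Proof.
move=> uS sS hl; rewrite Dg_S.
rewrite (eq_big_seq (fun i => Dg lab k v (rem i S) (+) Dg lab k (shift v i) (rem i S))); last first.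
  move=> i iS; have /andP[h1 h2] := labok_facet iS hl.
  by rewrite /Dstep h1 h2.
case: k sS hl => [|k] sS hl.
  by apply: big1_seq.
pose a (w : nat -> nat) (R : seq nat) := Dstep lab k w R.
rewrite (eq_big_seq (fun i => \big[addb/false]_(j <- rem i S)
   ((a v (rem j (rem i S)) (+) a (shift v j) (rem j (rem i S))) (+)
    (a (shift v i) (rem j (rem i S)) (+) a (shift (shift v i) j) (rem j (rem i S)))))); last first.
  by move=> i iS; rewrite !Dg_S [RHS]big_split.
apply: xor_sym => // i j.
rewrite remC // shiftC.
by rewrite -!addbA; congr addb; rewrite !addbA; congr addb; rewrite addbC.
Qed.

Lemma Dg_contain lab k : forall S v, uniq S -> size S = k -> Dg lab k v S ->
  (forall c, c < k -> haslab lab c v S) /\ ~~ labok lab k v S.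
Proof.
elim: k => [|k IH] S v uS sS hD.
  by case: S uS sS hD => //.
split; last first.
  by apply/negP => hl; move: hD; rewrite Dg_even.
move: hD; rewrite Dg_S => /big_xor_ex_seq [i [iS hi]].
have uR : uniq (rem i S) by rewrite rem_uniq.
have sR : size (rem i S) = k by rewrite size_rem // sS.
have key : forall w, Dstep lab k w (rem i S) -> forall c, c < k.+1 -> haslab lab c w (rem i S).
  move=> w /andP[hl hd] c hc; have [h1 h2] := IH _ w uR sR hd.
  move: hc; rewrite ltnS leq_eqVlt => /orP[/eqP ->|hc]; last exact: h1.
  exact: haslab_labok.
move=> c hc; apply: (haslab_facet iS).
case: (Dstep lab k v (rem i S)) /idP hi => [h|h] hi.
- by rewrite key.
- rewrite /= in hi; by rewrite (key _ hi) // orbT.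
Qed.

Fixpoint allgrid (n k : nat) : seq (nat -> nat) :=
  match k with
  | 0 => [:: fun _ => 0]
  | k'.+1 => [seq upd v k' x | x <- index_iota 0 n, v <- allgrid n k']
  end.

Definition gridp (n k : nat) (v : nat -> nat) : Prop :=
  (forall m, m < k -> v m < n) /\ (forall m, k <= m -> v m = 0).

Lemma upd_at v k x : upd v k x k = x.
Proof. by rewrite /upd eqxx. Qed.
Lemma upd_other v k x i : i != k -> upd v k x i = v i.
Proof. by rewrite /upd => /negbTE ->. Qed.
Lemma shift_upd_same v k x : shift (upd v k x) k = upd v k x.+1.
Proof. apply: functional_extensionality => m; rewrite /shift /upd; by do ! (case: eqP => //= ?; subst). Qed.
Lemma upd_upd_same v k x y : upd (upd v k x) k y = upd v k y.
Proof. apply: functional_extensionality => m; rewrite /shift /upd; by do ! (case: eqP => //= ?; subst). Qed.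
Lemma shift_upd_diff v k x i : i != k -> shift (upd v k x) i = upd (shift v i) k x.
Proof.
move/negbTE=> h; apply: functional_extensionality => m; rewrite /shift /upd h.
by case: (eqVneq m i) => [->|mi]; rewrite ?h ?eqxx.
Qed.
Lemma upd_upd_diff v k x i y : i != k -> upd (upd v k x) i y = upd (upd v i y) k x.
Proof.
move/negbTE=> h; apply: functional_extensionality => m; rewrite /upd.
by case: (eqVneq m i) => [->|mi]; rewrite ?h ?eqxx.
Qed.
Lemma upd_id v k x : v k = x -> upd v k x = v.
Proof. move=> h; apply: functional_extensionality => m; rewrite /upd; by case: eqP => // ->. Qed.

Lemma tele (g : nat -> bool) n :
  \big[addb/false]_(0 <= x < n) (g x (+) g x.+1) = g 0 (+) g n.
Proof.
elim: n => [|n IH]; first by rewrite big_geq // addbb.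
by rewrite big_nat_recr //= IH -addbA [g n (+) _]addbA addbb.
Qed.

Lemma eq_big_grid n k (F G : (nat -> nat) -> bool) :
  (forall v, gridp n k v -> F v = G v) ->
  \big[addb/false]_(v <- allgrid n k) F v = \big[addb/false]_(v <- allgrid n k) G v.
Proof.
elim: k F G => [|k IH] F G h /=.
  by rewrite !big_cons !big_nil h //; split.
rewrite !big_allpairs_dep; apply: eq_big_seq => x; rewrite mem_index_iota => /andP[_ hx].
apply: IH => v [h1 h2]; apply: h; split=> m hm.
- case: (eqVneq m k) => [->|mk]; first by rewrite upd_at.
  by rewrite upd_other // h1 // ltn_neqAle mk -ltnS.
- rewrite upd_other ?h2 //; first by apply: ltnW.
  by rewrite neq_ltn hm orbT.
Qed.

Lemma grid_ex n k (F : (nat -> nat) -> bool) :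
  \big[addb/false]_(v <- allgrid n k) F v -> exists v, gridp n k v /\ F v.
Proof.
elim: k F => [|k IH] F /=.
  rewrite big_cons big_nil addbF => h; exists (fun _ => 0); split=> //.
rewrite big_allpairs_dep => /big_xor_ex_seq [x [hx]].
rewrite mem_index_iota in hx; case/andP: hx => _ hx.
move/IH=> [v [[h1 h2] hv]]; exists (upd v k x); split=> //; split=> m hm.
- case: (eqVneq m k) => [->|mk]; first by rewrite upd_at.
  by rewrite upd_other // h1 // ltn_neqAle mk -ltnS.
- rewrite upd_other ?h2 //; first by apply: ltnW.
  by rewrite neq_ltn hm orbT.
Qed.

Lemma grid_tele n k i (h : (nat -> nat) -> bool) : 0 < n -> i < k ->
  \big[addb/false]_(v <- allgrid n k) (h v (+) h (shift v i)) =
  \big[addb/false]_(v <- allgrid n k) ((v i == 0) && (h v (+) h (upd v i n))).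
Proof.
move=> hn; elim: k h => [|k IH] h //= hik.
rewrite !big_allpairs_dep.
case: (eqVneq i k) => [->|ik].
- under eq_bigr => x _ do under eq_bigr => v _ do rewrite shift_upd_same.
  rewrite exchange_big /=.
  under [in RHS]eq_bigr => x _ do under eq_bigr => v _ do rewrite upd_at upd_upd_same.
  rewrite [RHS]exchange_big /=; apply: eq_bigr => v _.
  rewrite (tele (fun x => h (upd v k x))) big_ltn //= big1_seq ?addbF //.
  by move=> x; rewrite mem_index_iota => /andP[_ /andP[hx _]]; case: x hx.
- have ik' : i < k by rewrite ltn_neqAle ik -ltnS.
  apply: eq_bigr => x _.
  rewrite (eq_bigr (fun v => h (upd v k x) (+) h (upd (shift v i) k x))); last first.
    by move=> v _; rewrite shift_upd_diff.
  rewrite (IH (fun v => h (upd v k x))) //.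
  by apply: eq_bigr => v _; rewrite upd_other // [in RHS]upd_upd_diff.
Qed.

Lemma rem_rcons (s : seq nat) x : x \notin s -> rem x (s ++ [:: x]) = s.
Proof.
elim: s => [|a s IH] /=; first by rewrite eqxx.
rewrite inE negb_or => /andP[xa xs]; by rewrite eq_sym (negbTE xa) IH.
Qed.

Lemma rem_last j : rem j (iota 0 j.+1) = iota 0 j.
Proof. by rewrite -addn1 iotaD add0n rem_rcons // mem_iota ltnn andbF. Qed.

Definition sperner (lab : (nat -> nat) -> nat) (n d : nat) : Prop :=
  [/\ forall x, lab x <= d,
      forall x i, i < d -> x i = 0 -> lab x != i.+1 &
      forall x i, i < d -> x i = n -> lab x != 0].

Lemma haslab_all lab j w R : uniq R -> size R = j -> Dstep lab j w R ->
  forall c, c <= j -> haslab lab c w R.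
Proof.
move=> uR sR /andP[hl hd] c hc; have [h1 h2] := Dg_contain uR sR hd.
move: hc; rewrite leq_eqVlt => /orP[/eqP ->|hc]; last exact: h1.
exact: haslab_labok.
Qed.

Lemma boundary_false lab n d j i w : sperner lab n d -> j < d -> i <= j ->
  (w i = n \/ (w i = 0 /\ i < j)) -> Dstep lab j w (rem i (iota 0 j.+1)) = false.
Proof.
case=> Hl H1 H2 jd ij hw; apply/negP => hD.
have uR : uniq (rem i (iota 0 j.+1)) by rewrite rem_uniq // iota_uniq.
have iS : i \in iota 0 j.+1 by rewrite mem_iota.
have sR : size (rem i (iota 0 j.+1)) = j by rewrite size_rem // size_iota.
have iR : i \notin rem i (iota 0 j.+1) by rewrite (rem_filter i (iota_uniq 0 j.+1)) mem_filter /= eqxx.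
have hh := haslab_all uR sR hD.
case: hw => [hw|[hw hij]].
- have [x [[hx1 hx2] hx]] := haslab_ex uR (hh 0 (leq0n _)).
  have := H2 x i (leq_ltn_trans ij jd); rewrite hx1 // hw => /(_ erefl).
  by rewrite hx.
- have [x [[hx1 hx2] hx]] := haslab_ex uR (hh i.+1 hij).
  have := H1 x i (leq_ltn_trans ij jd); rewrite hx1 // hw => /(_ erefl).
  by rewrite hx eqxx.
Qed.

Lemma labok_base lab n d j v : sperner lab n d -> j < d -> gridp n j.+1 v -> v j = 0 ->
  labok lab j.+1 v (iota 0 j).
Proof.
case=> Hl H1 H2 jd [g1 g2] vj; apply: labok_all; first exact: iota_uniq.
move=> x [hx1 hx2]; rewrite ltnNge; apply/negP => hlx.
have xm : forall m, j <= m -> x m = 0.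
  move=> m jm; rewrite hx1; last by rewrite mem_iota negb_and -leqNgt jm orbT.
  by move: jm; rewrite leq_eqVlt => /orP[/eqP <-|]; [| exact: g2].
have hpos : 0 < lab x by apply: leq_trans hlx.
have := H1 x (lab x).-1; rewrite prednK //.
have hm : (lab x).-1 < d by rewrite -ltnS prednK // ltnS Hl.
rewrite xm ?eqxx //; first by move/(_ (Hl x) erefl).
by rewrite -ltnS prednK.
Qed.

Lemma count_main lab n d : 0 < n -> sperner lab n d ->
  forall j, j <= d -> \big[addb/false]_(v <- allgrid n j) Dg lab j v (iota 0 j) = true.
Proof.
move=> hn hs; elim=> [|j IH] hj.
  by rewrite /= big_cons big_nil.
have jd : j < d by [].
under eq_bigr => v _ do rewrite Dg_S.
rewrite exchange_big.
rewrite (eq_big_seq (fun i => i == j)); last first.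
  move=> i; rewrite mem_iota add0n => /andP[_ hi].
  rewrite grid_tele //.
  rewrite (eq_big_grid (G := fun v => (i == j) && ((v j == 0) && Dg lab j v (iota 0 j)))); last first.
    move=> v hv.
    rewrite (boundary_false (w := upd v i n) hs) //; last by left; rewrite upd_at.
    rewrite addbF.
    case: (eqVneq i j) => [->|ij].
      case: (eqVneq (v j) 0) => [hvj|hvj]; rewrite ?andFb ?andbF //.
      by rewrite !andTb rem_last /Dstep (labok_base hs).
    case: (eqVneq (v i) 0) => [hvi|hvi]; rewrite ?andFb //.
    rewrite (boundary_false hs) //; right; split=> //.
    by rewrite ltn_neqAle ij -ltnS.
  case: (eqVneq i j) => [_|ij]; last by rewrite big1.
  under eq_bigr => v _ do rewrite andTb.
  rewrite big_allpairs_dep big_ltn // big1_seq ?addbF; last first.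
    move=> x; rewrite mem_index_iota => /andP[_ /andP[hx _]].
    by apply: big1 => v _; rewrite upd_at; case: x hx.
  rewrite Monoid.mulm1 -[RHS](IH (ltnW hj)).
  apply: eq_big_grid => v [g1 g2].
  by rewrite upd_at eqxx /= upd_id // g2.
rewrite -[iota 0 j.+1]/(index_iota 0 j.+1) big_nat_recr //= eqxx addbT.
by rewrite big1_seq // => i; rewrite mem_index_iota => /andP[_ /andP[_ hi]]; rewrite (ltn_eqF hi).
Qed.

Lemma comb_final lab n d : 0 < n -> sperner lab n d ->
  exists v, gridp n d v /\ forall c, c <= d -> exists x, isv v (iota 0 d) x /\ lab x = c.
Proof.
move=> hn hs; have := count_main hn hs (leqnn d).
move/grid_ex => [v [hv hD]]; exists v; split=> // c hc.
have uS := iota_uniq 0 d.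
have sS : size (iota 0 d) = d by rewrite size_iota.
have [h1 h2] := Dg_contain uS sS hD.
apply: haslab_ex => //.
move: hc; rewrite leq_eqVlt => /orP[/eqP ->|hc]; last exact: h1.
apply: haslab_labok => //; apply: labok_all => // x _.
by case: hs => Hl _ _; rewrite ltnS.
Qed.

Open Scope R_scope.

Lemma bigRmax_ge (I : eqType) (r : seq I) (F : I -> R) o : o \in r ->
  F o <= \big[Rmax/0]_(i <- r) F i.
Proof.
elim: r => [|a r IH] //; rewrite inE big_cons => /orP[/eqP ->|h].
- exact: Rmax_l.
- apply: Rle_trans (IH h) _; exact: Rmax_r.
Qed.

Lemma dmax_ge d (x y : pointR d) o : Rabs (x o - y o) <= dmax x y.
Proof. rewrite /dmax; apply: bigRmax_ge; exact: mem_index_enum. Qed.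

Lemma dmax_le d (x y : pointR d) e : 0 <= e -> (forall o, Rabs (x o - y o) <= e) ->
  dmax x y <= e.
Proof.
move=> he h; rewrite /dmax; apply: (big_ind (fun r => r <= e)) => //.
by move=> a b ha hb; apply: Rmax_lub.
Qed.

Lemma dmax_ge0 d (x y : pointR d) : 0 <= dmax x y.
Proof.
rewrite /dmax; apply: (big_ind (fun r => 0 <= r)); first exact: Rle_refl.
- by move=> a b ha hb; apply: Rle_trans ha (Rmax_l _ _).
- by move=> i _; apply: Rabs_pos.
Qed.

Lemma dmax_sym d (x y : pointR d) : dmax x y = dmax y x.
Proof. by rewrite /dmax; apply: eq_bigr => i _; rewrite Rabs_minus_sym. Qed.

Lemma dmax_tri d (x y z : pointR d) : dmax x z <= dmax x y + dmax y z.
Proof.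
apply: dmax_le.
  by apply: Rplus_le_le_0_compat; apply: dmax_ge0.
move=> o; replace (x o - z o) with ((x o - y o) + (y o - z o)) by ring.
apply: Rle_trans (Rabs_triang _ _) _.
apply: Rplus_le_compat; exact: dmax_ge.
Qed.

Definition infA (A : nat -> Prop) := forall N, exists k, (N <= k)%N /\ A k.

Lemma cl1 (u : nat -> R) a b (A : nat -> Prop) : (forall k, a <= u k <= b) -> infA A ->
  exists l, forall dl, 0 < dl -> forall N, exists k, (N <= k)%N /\ A k /\ Rabs (u k - l) < dl.
Proof.
move=> hu hA.
pose tau m := proj1_sig (constructive_indefinite_description _ (hA m)).
have htau m : (m <= tau m)%N /\ A (tau m) := proj2_sig (constructive_indefinite_description _ (hA m)).
have [l hl] := Rtopology.Bolzano_Weierstrass (fun m => u (tau m)) _ (Rtopology.compact_P3 a b) (fun m => hu (tau m)).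
exists l => dl hdl N.
have nb : Rtopology.neighbourhood (fun y => Rabs (y - l) < dl) l.
  by exists (mkposreal dl hdl) => y.
have [p [hp hp2]] := hl _ N nb.
have hp3 : (N <= p)%N by apply/leP.
exists (tau p); have [h1 h2] := htau p; split; [exact: leq_trans hp3 h1 | by split].
Qed.

Lemma inv_small dl : 0 < dl -> exists M : nat, / (INR M + 1) < dl.
Proof.
move=> h; have [N [h1 h2]] := archimed_cor1 dl h; exists N.
apply: Rle_lt_trans h1; apply: Rinv_le_contravar.
  exact: lt_0_INR h2.
lra.
Qed.

Lemma sub1 (u : nat -> R) a b (A : nat -> Prop) : (forall k, a <= u k <= b) -> infA A ->
  exists l (A' : nat -> Prop), (forall k, A' k -> A k) /\ infA A' /\
    forall dl, 0 < dl -> exists N, forall k, (N <= k)%N -> A' k -> Rabs (u k - l) < dl.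
Proof.
move=> hu hA; have [l hl] := cl1 hu hA.
have hpos m : 0 < / (INR m + 1).
  apply: Rinv_0_lt_compat; have := pos_INR m; lra.
pose ch N m := proj1_sig (constructive_indefinite_description _ (hl _ (hpos m) N)).
have hch N m : (N <= ch N m)%N /\ A (ch N m) /\ Rabs (u (ch N m) - l) < / (INR m + 1)
  := proj2_sig (constructive_indefinite_description _ (hl _ (hpos m) N)).
pose fix sg m := match m with 0 => ch 0%N 0%N | m'.+1 => ch (sg m').+1 m'.+1 end.
have sgS m : (sg m < sg m.+1)%N by have [h _] := hch (sg m).+1 m.+1.
have sgmono m m' : (m < m')%N -> (sg m < sg m')%N.
  elim: m' => // m' IH; rewrite ltnS leq_eqVlt => /orP[/eqP ->|h]; first exact: sgS.
  exact: ltn_trans (IH h) (sgS m').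
have sgA m : A (sg m) /\ Rabs (u (sg m) - l) < / (INR m + 1).
  case: m => [|m] /=; first by have [_ h] := hch 0%N 0%N.
  by have [_ h] := hch (sg m).+1 m.+1.
have sgge m : (m <= sg m)%N.
  elim: m => // m IH; exact: leq_ltn_trans IH (sgS m).
exists l, (fun k => exists m, k = sg m); split; last split.
- by move=> k [m ->]; have [h _] := sgA m.
- by move=> N; exists (sg N); split; [exact: sgge | exists N].
- move=> dl hdl; have [M hM] := inv_small hdl; exists (sg M) => k hk [m km].
  have hMm : (M <= m)%N.
    rewrite leqNgt; apply/negP => hmM; have := sgmono _ _ hmM.
    by rewrite -km ltnNge hk.
  subst k; have [_ h] := sgA m; apply: Rlt_trans h _; apply: Rle_lt_trans hM.
  apply: Rinv_le_contravar; first by have := pos_INR M; lra.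
  apply: Rplus_le_compat_r; apply: le_INR; exact/leP.
Qed.

Lemma clusterd d (p : nat -> pointR d) B : (forall k o, 0 <= p k o <= B) ->
  forall s : seq 'I_d, exists A, infA A /\ exists x : pointR d, forall dl, 0 < dl ->
    exists N, forall k, (N <= k)%N -> A k -> forall o, o \in s -> Rabs (p k o - x o) < dl.
Proof.
move=> hp; elim=> [|o0 s IH].
  exists (fun _ => True); split; first by move=> N; exists N.
  by exists (fun _ => 0) => dl _; exists 0%N.
have [A [hA [x hx]]] := IH.
have [l [A' [h1 [h2 h3]]]] := sub1 (u := fun k => p k o0) (fun k => hp k o0) hA.
exists A'; split=> //; exists (fun o => if o == o0 then l else x o) => dl hdl.
have [N1 hN1] := hx dl hdl; have [N2 hN2] := h3 dl hdl.
exists (maxn N1 N2) => k hk hk' o; rewrite inE; case: eqVneq => [->|ne] /= hos.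
- by apply: hN2 => //; apply: leq_trans hk; exact: leq_maxr.
- by apply: hN1 => //; [apply: leq_trans hk; exact: leq_maxl | exact: h1].
Qed.

Lemma cluster d (p : nat -> pointR d) B : (forall k o, 0 <= p k o <= B) ->
  exists x : pointR d, forall dl, 0 < dl -> forall N, exists k, (N <= k)%N /\ dmax (p k) x < dl.
Proof.
move=> hp; have [A [hA [x hx]]] := clusterd hp (enum 'I_d).
exists x => dl hdl N.
have [N0 h0] := hx (dl / 2) ltac:(lra).
have [k [hk hAk]] := hA (maxn N N0).
exists k; split; first by apply: leq_trans hk; exact: leq_maxl.
apply: Rle_lt_trans (_ : dl / 2 < dl); last lra.
apply: dmax_le; first lra.
move=> o; apply: Rlt_le; apply: h0 => //; last by rewrite mem_enum.
by apply: leq_trans hk; exact: leq_maxr.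
Qed.

Lemma lemA d (P : setfam d) D : is_partition P -> 0 < D ->
  (forall X, P X -> strict_pairwise_bound D X) -> forall e, 0 < e ->
  exists p : pointR d, (forall o, 0 <= p o <= D) /\
    exists f : 'I_d.+1 -> regionR d, injective f /\ (forall c, P (f c)) /\
      (forall c, exists y, f c y /\ dmax y p <= e).
Proof.
move=> [_ [_ hcov]] hD hb e he.
pose mem (y : pointR d) := proj1_sig (constructive_indefinite_description _ (hcov y)).
have hmem y : P (mem y) /\ mem y y := proj2_sig (constructive_indefinite_description _ (hcov y)).
have [n [hn1 hn2]] := archimed_cor1 (e / D) (Rdiv_lt_0_compat _ _ he hD).
have nR : 0 < INR n := lt_0_INR _ hn2.
pose h := D / INR n.
have hh : 0 < h by apply: Rdiv_lt_0_compat.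
have hnh : INR n * h = D by rewrite /h; field; lra.
have hhe : h <= e.
  have : D * / INR n < D * (e / D) by apply: Rmult_lt_compat_l.
  rewrite /h /Rdiv; have -> : D * (e * / D) = e by field; lra.
  lra.
pose pt (x : nat -> nat) : pointR d := fun o => INR (x o) * h.
pose meets (X : regionR d) (i : nat) := exists y, X y /\ forall o : 'I_d, nat_of_ord o = i -> y o = 0.
pose tm X i : bool := if excluded_middle_informative (meets X i) then true else false.
have tmP X i : tm X i -> meets X i by rewrite /tm; case: excluded_middle_informative.
have tmN X i : ~~ tm X i -> ~ meets X i by rewrite /tm; case: excluded_middle_informative.
pose Lab X := if [seq i <- iota 0 d | ~~ tm X i] is i :: _ then i.+1 else 0%N.
pose lab x := Lab (mem (pt x)).
have hs : sperner lab n d.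
  split.
  - move=> x; rewrite /lab /Lab; case E: [seq _ <- _ | _] => [|i s] //.
    have : i \in [seq i <- iota 0 d | ~~ tm (mem (pt x)) i] by rewrite E inE eqxx.
    by rewrite mem_filter mem_iota => /andP[_ /andP[_ hi]].
  - move=> x i hi hx; rewrite /lab /Lab; case E: [seq _ <- _ | _] => [|i' s] //.
    apply/eqP => -[ii]; subst i'.
    have : i \in [seq i <- iota 0 d | ~~ tm (mem (pt x)) i] by rewrite E inE eqxx.
    rewrite mem_filter => /andP[/tmN hn _]; apply: hn.
    exists (pt x); split; first by have [_ ?] := hmem (pt x).
    by move=> o ho; rewrite /pt ho hx /=; ring.
  - move=> x i hi hx; rewrite /lab /Lab; case E: [seq _ <- _ | _] => [|i' s] //.
    have : i \notin [seq i <- iota 0 d | ~~ tm (mem (pt x)) i] by rewrite E.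
    rewrite mem_filter mem_iota hi /= andbT negbK => /tmP [y [hy hy0]].
    have [hP hx'] := hmem (pt x).
    have := hb _ hP y (pt x) hy hx'.
    have := dmax_ge y (pt x) (Ordinal hi).
    rewrite hy0 // /pt /= hx Rminus_0_l Rabs_Ropp Rabs_right; last first.
      by apply: Rle_ge; rewrite hnh; lra.
    rewrite hnh; lra.
have [v [[g1 g2] hv]] := comb_final (lab := lab) (n := n) (d := d) (introT ltP hn2) hs.
have hvc (c : 'I_d.+1) : exists x, isv v (iota 0 d) x /\ lab x = c.
  by apply: hv; rewrite -ltnS.
pose xc c := proj1_sig (constructive_indefinite_description _ (hvc c)).
have hxc c : isv v (iota 0 d) (xc c) /\ lab (xc c) = c :=
  proj2_sig (constructive_indefinite_description _ (hvc c)).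
exists (fun o => (INR (v o) + / 2) * h); split.
  move=> o; have h0 := pos_INR (v o); split.
    apply: Rmult_le_pos; lra.
  have : (INR (v o) + 1 <= INR n).
    rewrite -S_INR; apply: le_INR; apply/leP; exact: g1.
  rewrite -hnh => hle; apply: Rmult_le_compat_r; lra.
exists (fun c => mem (pt (xc c))); split; last split.
- move=> c1 c2 heq; apply: val_inj => /=.
  have [_ <-] := hxc c1; have [_ <-] := hxc c2.
  by rewrite /lab heq.
- by move=> c; have [] := hmem (pt (xc c)).
- move=> c; exists (pt (xc c)); split; first by have [] := hmem (pt (xc c)).
  apply: dmax_le; first lra.
  move=> o; have [[_ hb2] _] := hxc c.
  have /andP[b1 b2] := hb2 o.
  rewrite /pt; have [-> | ->] : xc c o = v o \/ xc c o = (v o).+1.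
    by move: b1; rewrite leq_eqVlt => /orP[/eqP <-|b1]; [left|right; apply/eqP; rewrite eqn_leq b2 b1].
  + replace (INR (v o) * h - (INR (v o) + / 2) * h) with (- (h / 2)) by field.
    rewrite Rabs_Ropp Rabs_right; lra.
  + rewrite S_INR; replace ((INR (v o) + 1) * h - (INR (v o) + / 2) * h) with (h / 2) by field.
    rewrite Rabs_right; lra.
Qed.

Lemma fill d (F : setfam d) (f : 'I_d.+1 -> regionR d) : card_le F d.+1 ->
  injective f -> (forall c, F (f c)) -> forall X, F X -> exists c, X = f c.
Proof.
move=> hle hinj hf X hX; apply: NNPP => hne.
have hne' : forall c, X <> f c by move=> c hc; apply: hne; exists c.
pose g (o : 'I_d.+2) : regionR d := if (o < d.+1)%N then f (inord o) else X.
apply: (hle g).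
- by move=> o; rewrite /g; case: ifP => _; [exact: hf | exact: hX].
- move=> o1 o2; rewrite /g; case: ifP => h1; case: ifP => h2.
  + by move/hinj => /(congr1 val); rewrite /= !inordK // => e; apply: val_inj.
  + by move=> e; exfalso; apply: (hne' _ (esym e)).
  + by move=> e; exfalso; apply: (hne' _ e).
  + move=> _; apply: ord_inj;     have l1 := ltn_ord o1; have l2 := ltn_ord o2.
    move/negbT: h1; move/negbT: h2; rewrite -!leqNgt => h2 h1.
    have e1 : nat_of_ord o1 = d.+1 by apply/eqP; rewrite eqn_leq h1 andbT -ltnS l1.
    have e2 : nat_of_ord o2 = d.+1 by apply/eqP; rewrite eqn_leq h2 andbT -ltnS l2.
    by rewrite e1 e2.
Qed.

Theorem mainTheorem15 (d : nat) (P : setfam d) :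
  is_partition P ->
  (exists D : R, 0 < D /\ forall X, P X -> strict_pairwise_bound D X) ->
  forall eps : R, 0 < eps ->
  (forall q : pointR d, card_le (nbhd P eps q) d.+1) ->
  (exists p : pointR d, card_eq (nbhd P eps p) d.+1) /\ has_clique P d.+1.
Proof.
move=> hP [D [hD hb]] eps heps hle.
split.
  have [p [_ [f [hinj [hPf hf]]]]] := lemA hP hD hb heps.
  have hN : forall c, nbhd P eps p (f c).
    by move=> c; split=> //; have [y [hy hyp]] := hf c; exists y.
  exists p, f; split=> //; split=> //.
  exact: fill.
pose e (k : nat) := eps / (INR k + 1).
have he k : 0 < e k.
  by apply: Rdiv_lt_0_compat => //; have := pos_INR k; lra.
have hex k := lemA hP hD hb (he k).
pose pk k := proj1_sig (constructive_indefinite_description _ (hex k)).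
have hpk k := proj2_sig (constructive_indefinite_description _ (hex k)).
pose fk k := proj1_sig (constructive_indefinite_description _ (proj2 (hpk k))).
have hfk k : injective (fk k) /\ (forall c, P (fk k c)) /\
    (forall c, exists y, fk k c y /\ dmax y (pk k) <= e k) :=
  proj2_sig (constructive_indefinite_description _ (proj2 (hpk k))).
have [x hx] := cluster (p := pk) (B := D) (fun k => proj1 (hpk k)).
have key : forall dl, 0 < dl -> dl <= eps -> forall k, dmax (pk k) x < dl / 2 ->
    e k <= dl / 2 -> forall c, nbhd P eps x (fk k c) /\ exists y, fk k c y /\ dmax y x < dl.
  move=> dl hdl hdle k hk1 hk2 c; have [_ [hP' hy]] := hfk k.
  have [y [hy1 hy2]] := hy c.
  have hyx : dmax y x < dl.
    apply: Rle_lt_trans (dmax_tri y (pk k) x) _; lra.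
  split; last by exists y.
  split=> //; exists y; split=> //; rewrite /closed_ball; lra.
have [k0 [hk0 hk0x]] := hx (eps / 2) ltac:(lra) 1%N.
have hek0 : e k0 <= eps / 2.
  rewrite /e /Rdiv; apply: Rmult_le_compat_l; first lra.
  apply: Rinv_le_contravar; first lra.
  have : 1 <= INR k0 by apply: (le_INR 1); apply/leP.
  lra.
have [hinj0 [hP0 _]] := hfk k0.
have hG : forall c, nbhd P eps x (fk k0 c).
  by move=> c; have [] := key eps heps (Rle_refl _) k0 hk0x hek0 c.
have hcl : forall c, closureR (fk k0 c) x.
  move=> c dl0 hdl0.
  pose dl := Rmin dl0 eps.
  have hdl : 0 < dl by apply: Rmin_pos.
  have hdl1 : dl <= dl0 by apply: Rmin_l.
  have hdl2 : dl <= eps by apply: Rmin_r.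
  have [M hM] := @inv_small (dl / 2 / eps) ltac:(apply: Rdiv_lt_0_compat; lra).
  have [k [hk hkx]] := hx (dl / 2) ltac:(lra) M.
  have hek : e k <= dl / 2.
    rewrite /e /Rdiv; apply: Rle_trans (_ : eps * / (INR M + 1) <= _).
      apply: Rmult_le_compat_l; first lra.
      apply: Rinv_le_contravar; first by have := pos_INR M; lra.
      apply: Rplus_le_compat_r; apply: le_INR; exact/leP.
    have : eps * / (INR M + 1) < eps * (dl / 2 / eps) by apply: Rmult_lt_compat_l.
    have -> : eps * (dl / 2 / eps) = dl * / 2 by field; lra.
    lra.
  have hkey := key dl hdl hdl2 k hkx hek.
  have [_ [hPk _]] := hfk k.
  have [hinjk _] := hfk k.
  have [c' hc'] := fill (hle x) hinjk (fun c => proj1 (hkey c)) (hG c).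
  have [_ [y [hy1 hy2]]] := hkey c'.
  exists y; split; first by rewrite hc'.
  rewrite dmax_sym; lra.
exists (fk k0); split=> //; split=> //.
by move=> i j _; exists x; split.
Qed.
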